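(* On $\mathcal M_{\mathcal G,\Gamma}$ the metric $$\mathrm w_{\mathcal G,\Gamma}(T,S)=\mathrm a_{\mathcal G}(T,S)+\sup_{g\in\Gamma}\mathrm a(T^g,S^g)$$ induces the same topology as the metric $\mathrm m_{\mathcal G,\Gamma}$ (the leash topology).
   Context: $(X,\Sigma,\mu)$ is a separable Lebesgue space with a non-atomic probability measure $\mu$. $\mathcal A$ is the group of invertible measure-preserving transformations of $X$, two transformations being identified if they agree outside a null set. Fix a countable family $\{A_i\}_{i\in\mathbb N}\subset\Sigma$ that generates $\Sigma$ and is dense in $\Sigma$ (for every $A\in\Sigma$ and $\varepsilon>0$ there is $i$ with $\mu(A_i\triangle A)<\varepsilon$). For $T,S\in\mathcal A$ put $\mathrm d(T,S)=\sum_{i}2^{-i}\big(\mu(TA_i\triangle SA_i)+\mu(T^{-1}A_i\triangle S^{-1}A_i)\big)$ and $\mathrm a(T,S)=\sum_{i,j}2^{-(i+j)}|\mu(TA_i\cap A_j)-\mu(SA_i\cap A_j)|$. $\mathcal G$ is a Hausdorff locally compact group with a countable neighborhood base. Fix an at most countable family $\{K_i\}$ of compact subsets of $\mathcal G$ with nonempty interiors whose union contains a set generating $\mathcal G$. An action of $\mathcal G$ is a family $T=\{T^g\}_{g\in\mathcal G}\subset\mathcal A$ with $T^gT^h=T^{gh}$ for all $g,h$ and such that $g\mapsto\mu(T^gA\cap B)$ is continuous for all $A,B\in\Sigma$. For actions $T,S$: $\mathrm d_{\mathcal G}(T,S)=\sum_i 2^{-i}\sup_{g\in K_i}\mathrm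 d(T^g,S^g)$ and $\mathrm a_{\mathcal G}(T,S)=\sum_i 2^{-i}\sup_{g\in K_i}\mathrm a(T^g,S^g)$. Let $\Gamma\subset\mathcal G$ be an unbounded subset (not contained in any compact set). An action $T$ is $\Gamma$-mixing if for all $A,B\in\Sigma$ and $\varepsilon>0$ there is a compact $C\subset\mathcal G$ with $|\mu(T^gA\cap B)-\mu(A)\mu(B)|<\varepsilon$ for all $g\in\Gamma\setminus C$. $\mathcal M_{\mathcal G,\Gamma}$ is the set of all $\Gamma$-mixing actions with the leash metric $\mathrm m_{\mathcal G,\Gamma}(T,S)=\mathrm d_{\mathcal G}(T,S)+\sup_{g\in\Gamma}\mathrm a(T^g,S^g)$. *)

(* Defs.v *)
From HB Require Import structures.
From mathcomp Require Import all_boot all_order all_algebra.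
From mathcomp Require Import all_classical all_reals all_analysis.
Import Order.TTheory GRing.Theory Num.Theory.
Import numFieldNormedType.Exports.

Set Implicit Arguments.
Unset Strict Implicit.
Unset Printing Implicit Defensive.

Local Open Scope classical_set_scope.
Local Open Scope ring_scope.

Definition lc_group (G : topologicalType) (mul : G -> G -> G) (inv : G -> G)
    (one : G) : Prop :=
  [/\ (forall x y z, mul x (mul y z) = mul (mul x y) z) /\
      (forall x, mul one x = x /\ mul x one = x) /\
      (forall x, mul (inv x) x = one /\ mul x (inv x) = one),
      continuous (fun p : G * G => mul p.1 p.2) /\ continuous inv,
      hausdorff_space G,
      locally_compact [set: G] &
      (forall x : G, exists B : nat -> set G,
          (forall n, nbhs x (B n)) /\
          (forall U, nbhs x U -> exists n, B n `<=` U))].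

Definition is_subgroup (G : Type) (mul : G -> G -> G) (inv : G -> G) (one : G)
    (H : set G) : Prop :=
  H one /\ (forall x y, H x -> H y -> H (mul x (inv y))).

Definition generates (G : Type) (mul : G -> G -> G) (inv : G -> G) (one : G)
    (A : set G) : Prop :=
  forall H, is_subgroup mul inv one H -> A `<=` H -> H = [set: G].

Definition unbounded (G : topologicalType) (Gam : set G) : Prop :=
  ~ (exists C : set G, compact C /\ Gam `<=` C).

Definition nonatomic d (X : measurableType d) (R : realType)
    (mu : set X -> \bar R) : Prop :=
  forall A, measurable A -> (0 < mu A)%E ->
    exists B, [/\ measurable B, B `<=` A & (0 < mu B < mu A)%E].

(* (non-atomic) Lebesgue space: isomorphic mod 0 to [0,1] with Lebesgue
   measure (on Borel sets). *)
Definition nonatomic_lebesgue_space d (X : measurableType d) (R : realType)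
    (mu : set X -> \bar R) : Prop :=
  exists (X0 : set X) (Y0 : set R) (phi : X -> R) (psi : R -> X),
    [/\ measurable X0 /\ mu X0 = 1%E,
        measurable (Y0 : set (measurableTypeR R)) /\ Y0 `<=` `[0%R, 1%R] /\
          (@lebesgue_measure R) Y0 = 1%E,
        (forall x, X0 x -> Y0 (phi x) /\ psi (phi x) = x) /\
        (forall y, Y0 y -> X0 (psi y) /\ phi (psi y) = y),
        measurable_fun X0 (phi : X -> measurableTypeR R) /\
        measurable_fun (Y0 : set (measurableTypeR R)) psi &
        (forall B : set (measurableTypeR R), measurable B ->
           mu (X0 `&` phi @^-1` B) = (@lebesgue_measure R) (Y0 `&` B))].

(* Invertible measure-preserving transformations (representatives of the
   elements of the group 𝒜; elements of 𝒜 are identified mod null sets,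
   and all the quantities below only depend on the classes). *)
Definition inv_mpt d (X : measurableType d) (R : realType)
    (mu : set X -> \bar R) (T : X -> X) : Prop :=
  [/\ measurable_fun [set: X] T,
      (forall A, measurable A -> mu (T @^-1` A) = mu A) &
      exists Tinv : X -> X,
        [/\ cancel T Tinv, cancel Tinv T & measurable_fun [set: X] Tinv]].

Definition symdiff (X : Type) (A B : set X) : set X := (A `\` B) `|` (B `\` A).

Section Metrics.
Context d (X : measurableType d) (R : realType) (mu : set X -> \bar R).
Context (A : nat -> set X).
Local Open Scope ereal_scope.

Definition dist_d (T S : X -> X) : \bar R :=
  \sum_(i <oo) ((2 ^- i)%:E *
     (mu (symdiff (T @` A i) (S @` A i)) +
      mu (symdiff (T @^-1` A i) (S @^-1` A i)))).

Definition dist_a (T S : X -> X) : \bar R :=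
  \sum_(i <oo) \sum_(j <oo)
    ((2 ^- (i + j))%:E * `| mu (T @` A i `&` A j) - mu (S @` A i `&` A j) |).

Context (G : topologicalType) (mul : G -> G -> G) (I : set nat)
  (K : nat -> set G) (Gam : set G).

Definition is_action (T : G -> X -> X) : Prop :=
  [/\ forall g, inv_mpt mu (T g),
      forall g h, {ae mu, forall x, T g (T h x) = T (mul g h) x} &
      forall B C, measurable B -> measurable C ->
        continuous (fun g => fine (mu (T g @` B `&` C)))].

Definition Gam_mixing (T : G -> X -> X) : Prop :=
  forall B C, measurable B -> measurable C -> forall eps : R, (0 < eps)%R ->
    exists Cp : set G, compact Cp /\
      forall g, Gam g -> ~ Cp g ->
        `| mu (T g @` B `&` C) - mu B * mu C | < eps%:E.

Definition mixing_actions : set (G -> X -> X) :=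
  [set T | is_action T /\ Gam_mixing T].

Definition dist_dG (T S : G -> X -> X) : \bar R :=
  \sum_(i <oo | i \in I)
    ((2 ^- i)%:E * ereal_sup [set dist_d (T g) (S g) | g in K i]).

Definition dist_aG (T S : G -> X -> X) : \bar R :=
  \sum_(i <oo | i \in I)
    ((2 ^- i)%:E * ereal_sup [set dist_a (T g) (S g) | g in K i]).

Definition sup_a_Gam (T S : G -> X -> X) : \bar R :=
  ereal_sup [set dist_a (T g) (S g) | g in Gam].

Definition leash_m (T S : G -> X -> X) : \bar R := dist_dG T S + sup_a_Gam T S.

Definition metric_w (T S : G -> X -> X) : \bar R := dist_aG T S + sup_a_Gam T S.

End Metrics.

Definition metric_open (Y : Type) (R : realType) (M : set Y)
    (rho : Y -> Y -> \bar R) (U : set Y) : Prop :=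
  U `<=` M /\
  forall T, U T -> exists e : R, (0 < e)%R /\
    forall S, M S -> (rho T S < e%:E)%E -> U S.

(* Main.v *)
Require Import Defs.
From HB Require Import structures.
From mathcomp Require Import all_boot all_order all_algebra.
From mathcomp Require Import all_classical all_reals all_analysis.
From mathcomp Require Import lra.
Import Order.TTheory GRing.Theory Num.Theory.
Import numFieldNormedType.Exports.
Local Open Scope classical_set_scope.
Local Open Scope ring_scope.
Set Implicit Arguments. Unset Strict Implicit. Unset Printing Implicit Defensive.
Section Ser.
Variable R : realType.

Lemma two_pos_inv (n : nat) : 0 < (2 : R) ^- n.
Proof. by rewrite invr_gt0 exprn_gt0. Qed.

Lemma geo_eq (m n : nat) : (m <= n)%N ->
  \sum_(m <= k < n) ((2 : R) ^- k) = 2 * 2 ^- m - 2 * 2 ^- n.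
Proof.
elim: n => [|n IH]; first by rewrite leqn0 => /eqP ->; rewrite big_geq// subrr.
rewrite leq_eqVlt => /orP[/eqP ->|]; first by rewrite big_geq// subrr.
rewrite ltnS => mn; rewrite big_nat_recr//= IH// exprS invfM.
have h : 0 < (2 : R) ^- n by exact: two_pos_inv.
set y := 2 ^- n; lra.
Qed.

Lemma geo_le (m n : nat) : \sum_(m <= k < n) ((2 : R) ^- k) <= 2 * 2 ^- m.
Proof.
have [mn|nm] := leqP m n.
  rewrite geo_eq//; have := two_pos_inv n; lra.
rewrite big_geq ?(ltnW nm)//; have := two_pos_inv m; lra.
Qed.


Lemma pow_small (x : R) : 0 < x -> exists N : nat, 2 ^- N <= x.
Proof.
move=> x0; have b0 : (0 <= x^-1)%R by rewrite invr_ge0 ltW.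
have := archi_boundP b0; set N := Num.Def.archi_bound _ => hN.
exists N.
have hN2 : (N%:R : R) <= 2 ^+ N.
  by rewrite -natrX ler_nat ltnW// ltn_expl.
have p2 : (0 : R) < 2 ^+ N by rewrite exprn_gt0.
rewrite -[x]invrK lef_pV2 ?posrE ?invr_gt0//.
by apply: ltW; apply: lt_le_trans hN hN2.
Qed.

Lemma fin_min (N : nat) (f : nat -> R) : (forall i, 0 < f i) ->
  exists2 dl, 0 < dl & forall i, (i < N)%N -> dl <= f i.
Proof.
move=> f0; elim: N => [|N [dl dl0 hdl]]; first by exists 1 => //.
exists (Num.min dl (f N)); first by rewrite lt_min dl0 f0.
move=> i; rewrite ltnS leq_eqVlt => /orP[/eqP ->|iN].
  by rewrite ge_min lexx orbT.
by rewrite ge_min hdl.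
Qed.

Lemma pow_anti (m n : nat) : (m <= n)%N -> (2 : R) ^- n <= 2 ^- m.
Proof.
move=> mn; rewrite lef_pV2 ?posrE ?exprn_gt0//.
by rewrite (ler_eXn2l (ltr1n R 2)).
Qed.

Local Open Scope ereal_scope.

Lemma GL (c eps : R) (N : nat) (f : nat -> \bar R) :
  (0 <= c)%R -> (0 <= eps)%R -> (forall i, 0 <= f i) -> (forall i, f i <= c%:E) ->
  (forall i, (i < N)%N -> f i <= eps%:E) ->
  \sum_(i <oo) ((2 ^- i)%:E * f i) <= (2 * eps + 2 * c * 2 ^- N)%:E.
Proof.
move=> c0 e0 f0 fc fe.
have t0 : forall i, 0 <= (2 ^- i)%:E * f i.
  by move=> i; rewrite mule_ge0// lee_fin ltW// two_pos_inv.
rewrite (nneseries_split 0 N)// add0n EFinD; apply: leeD.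
  apply: (@le_trans _ _ (\sum_(0 <= k < N) ((2 ^- k) * eps)%:E)).
    rewrite big_nat_cond [X in _ <= X]big_nat_cond; apply: lee_sum => k.
    case/andP => /andP[_ kN] _; rewrite EFinM; apply: lee_wpmul2l.
      by rewrite lee_fin ltW// two_pos_inv.
    exact: fe.
  rewrite sumEFin lee_fin -mulr_suml.
  have := geo_le 0 N; rewrite expr0 invr1 mulr1 => h.
  by set S := (\sum_(0 <= k < N) _)%R in h *; nra.
apply: lime_le; first by apply: is_cvg_nneseries => n _ _; exact: t0.
apply: nearW => n.
apply: (@le_trans _ _ (\sum_(N <= k < n) ((2 ^- k) * c)%:E)).
  rewrite big_nat_cond [X in _ <= X]big_nat_cond; apply: lee_sum => k _.
  rewrite EFinM; apply: lee_wpmul2l => //.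
rewrite sumEFin lee_fin -mulr_suml.
have := geo_le N n => h.
by set S := (\sum_(N <= k < n) _)%R in h *; have := @two_pos_inv N; nra.
Qed.

End Ser.
Lemma near_fin (T' : Type) (F : set_system T') (FF : Filter F) (P : nat -> T' -> Prop) N :
  (forall k, (k < N)%N -> F (P k)) -> F (fun x => forall k, (k < N)%N -> P k x).
Proof.
elim: N => [|N IH] h; first by apply: filterE => x k.
have h1 := IH (fun k kN => h k (ltnW kN)).
have h2 := h N (ltnSn N).
apply: filterS (filterI h1 h2) => x [H1 H2] k; rewrite ltnS leq_eqVlt => /orP[/eqP ->//|].
exact: H1.
Qed.

Section MP.
Context d (X : measurableType d) (R : realType) (mu : probability X R).
Local Notation p B := (fine (mu B)).

Lemma muE B : measurable B -> mu B = (p B)%:E.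
Proof. by move=> mB; rewrite fineK// fin_num_measure. Qed.

Lemma p_ge0 B : 0 <= p B.
Proof. by apply: fine_ge0; exact: measure_ge0. Qed.

Lemma p_le1 B : measurable B -> p B <= 1.
Proof. by move=> mB; rewrite -lee_fin -muE// probability_le1. Qed.

Lemma p_mono B C : measurable B -> measurable C -> B `<=` C -> p B <= p C.
Proof. by move=> mB mC BC; rewrite -lee_fin -!muE// le_measure// inE. Qed.

Lemma p_sub B C D : measurable B -> measurable C -> measurable D ->
  B `<=` C `|` D -> p B <= p C + p D.
Proof.
move=> mB mC mD BCD; have mCD : measurable (C `|` D) by exact: measurableU.
have := p_mono mB mCD BCD => h; apply: (le_trans h).
by rewrite -lee_fin EFinD -!muE ?measureU2.
Qed.

Lemma p_diff B C : measurable B -> measurable C -> p (B `\` C) = p B - p (B `&` C).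
Proof.
move=> mB mC; apply: EFin_inj.
have mBC : measurable (B `\` C) by exact: measurableD.
have mIC : measurable (B `&` C) by exact: measurableI.
rewrite EFinB -!muE// measureD//.
exact: (le_lt_trans (probability_le1 mu mB) (ltry 1)).
Qed.


Lemma msymdiff (B C : set X) : measurable B -> measurable C -> measurable (symdiff B C).
Proof. by move=> mB mC; apply: measurableU; apply: measurableD. Qed.

Lemma p_chain (E F C : set X) eps : measurable E -> measurable F -> measurable C ->
  p E = p F -> p (symdiff C E) <= eps -> p (E `&` C) <= p (F `&` C) + eps ->
  p (symdiff E F) <= 6 * eps.
Proof.
move=> mE mF mC pEF hCE hEC.
have mEF : measurable (E `&` F) by exact: measurableI.
have h1 : p (symdiff E F) <= p (E `\` F) + p (F `\` E).
  by apply: p_sub => //; [exact: msymdiff|exact: measurableD|exact: measurableD].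
rewrite p_diff// [in X in _ <= _ + X]p_diff// [F `&` E]setIC in h1.
have h2 : p (F `&` C) <= p (E `&` F) + p (C `\` E).
  apply: p_sub => //; [exact: measurableI|exact: measurableD|].
  by move=> x [Fx Cx]; have [Ex|nEx] := pselect (E x); [left|right].
have h3 : p E <= p (E `&` C) + p (E `\` C).
  apply: p_sub => //; [exact: measurableI|exact: measurableD|].
  by move=> x Ex; have [Cx|nCx] := pselect (C x); [left|right].
have h4 : p (C `\` E) <= p (symdiff C E).
  by apply: p_mono => //; [exact: measurableD|exact: msymdiff|move=> x ?; left].
have h5 : p (E `\` C) <= p (symdiff C E).
  by apply: p_mono => //; [exact: measurableD|exact: msymdiff|move=> x ?; right].
lra.
Qed.

Lemma p_absI (E F C : set X) : measurable E -> measurable F -> measurable C ->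
  `|p (E `&` C) - p (F `&` C)| <= p (symdiff E F).
Proof.
move=> mE mF mC.
have mEF := msymdiff mE mF.
have h1 : p (E `&` C) <= p (F `&` C) + p (symdiff E F).
  apply: p_sub => //; [exact: measurableI|exact: measurableI|].
  by move=> x [Ex Cx]; have [Fx|nFx] := pselect (F x); [left|right; left].
have h2 : p (F `&` C) <= p (E `&` C) + p (symdiff E F).
  apply: p_sub => //; [exact: measurableI|exact: measurableI|].
  by move=> x [Fx Cx]; have [Ex|nEx] := pselect (E x); [left|right; right].
rewrite ler_norml; apply/andP; split; lra.
Qed.


Section Mpt.
Variable Q : X -> X.
Hypothesis hQ : inv_mpt mu Q.

Lemma imE : exists Qi : X -> X, measurable_fun setT Qi /\ forall B, Q @` B = Qi @^-1` B.
Proof.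
case: hQ => _ _ [Qi [QK QiK mQi]]; exists Qi; split => // B.
apply/seteqP; split => x /=.
  by case=> b Bb <-; rewrite QK.
by move=> Bx; exists (Qi x) => //; rewrite QiK.
Qed.

Lemma im_meas B : measurable B -> measurable (Q @` B).
Proof.
move=> mB; have [Qi [mQi ->]] := imE.
by rewrite -[_ @^-1` _]setTI; apply: mQi.
Qed.

Lemma pre_meas B : measurable B -> measurable (Q @^-1` B).
Proof.
case: hQ => mQ _ _ mB.
by rewrite -[_ @^-1` _]setTI; apply: mQ.
Qed.

Lemma pre_im B : Q @^-1` (Q @` B) = B.
Proof.
case: hQ => _ _ [Qi [QK QiK mQi]].
apply/seteqP; split => x /=.
  by case=> b Bb /(congr1 Qi); rewrite !QK => <-.
by move=> Bx; exists x.
Qed.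

Lemma p_pre B : measurable B -> p (Q @^-1` B) = p B.
Proof. by case: hQ => _ hm _ mB; rewrite hm. Qed.

Lemma p_im B : measurable B -> p (Q @` B) = p B.
Proof. by move=> mB; rewrite -p_pre ?pre_im//; exact: im_meas. Qed.

Lemma im_preI B C : Q @` (Q @^-1` B `&` C) = B `&` Q @` C.
Proof.
case: hQ => _ _ [Qi [QK QiK mQi]].
apply/seteqP; split => x /=.
  by case=> y [By Cy] <-; split => //; exists y.
by move=> [Bx [y Cy yx]]; exists y => //; split => //; rewrite yx.
Qed.

End Mpt.


Local Open Scope ereal_scope.

Lemma term_le (f : nat -> \bar R) k : (forall i, 0 <= f i) -> f k <= \sum_(i <oo) f i.
Proof.
move=> f0; apply: le_trans (nneseries_lim_ge k.+1 _); last by move=> *; exact: f0.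
rewrite big_nat_recr//= leeDr//; exact: sume_ge0.
Qed.

Section Dist.
Variable A : nat -> set X.
Hypothesis hA : forall i, measurable (A i).

Definition hh (Q P : X -> X) i j :=
  `|p (Q @` A i `&` A j) - p (P @` A i `&` A j)|%R.
Definition uu (Q P : X -> X) i :=
  (p (symdiff (Q @` A i) (P @` A i)) + p (symdiff (Q @^-1` A i) (P @^-1` A i)))%R.

Lemma dE Q P : inv_mpt mu Q -> inv_mpt mu P ->
  dist_d mu A Q P = \sum_(i <oo) ((2 ^- i)%:E * (uu Q P i)%:E).
Proof.
move=> hQ hP; apply: eq_eseriesr => i _; rewrite /uu EFinD -!muE//.
  by apply: msymdiff; apply: pre_meas.
by apply: msymdiff; apply: im_meas.
Qed.

Lemma aE Q P : inv_mpt mu Q -> inv_mpt mu P ->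
  dist_a mu A Q P =
  \sum_(i <oo) ((2 ^- i)%:E * \sum_(j <oo) ((2 ^- j)%:E * (hh Q P i j)%:E)).
Proof.
move=> hQ hP; apply: eq_eseriesr => i _; rewrite -nneseriesZl; last first.
  by move=> j _; rewrite mule_ge0// lee_fin ?normr_ge0// ltW// two_pos_inv.
apply: eq_eseriesr => j _; rewrite /hh -abse_EFin EFinB -!muE ?exprD ?invfM ?EFinM ?muleA//.
  by apply: measurableI => //; apply: im_meas.
by apply: measurableI => //; apply: im_meas.
Qed.

Lemma hh_ge0 Q P i j : (0 <= hh Q P i j)%R.
Proof. exact: normr_ge0. Qed.

Lemma hh_le1 Q P i j : inv_mpt mu Q -> inv_mpt mu P -> (hh Q P i j <= 1)%R.
Proof.
move=> hQ hP; rewrite /hh.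
have m1 : measurable (Q @` A i `&` A j) by apply: measurableI => //; exact: im_meas.
have m2 : measurable (P @` A i `&` A j) by apply: measurableI => //; exact: im_meas.
have := p_le1 m1; have := p_le1 m2; have := @p_ge0 (Q @` A i `&` A j);
  have := @p_ge0 (P @` A i `&` A j).
set x := p (Q @` A i `&` A j); set y := p (P @` A i `&` A j) => *.
rewrite ler_norml; apply/andP; split; lra.
Qed.

Lemma uu_ge0 Q P i : (0 <= uu Q P i)%R.
Proof. by rewrite addr_ge0// p_ge0. Qed.

Lemma uu_le2 Q P i : inv_mpt mu Q -> inv_mpt mu P -> (uu Q P i <= 2)%R.
Proof.
move=> hQ hP; rewrite /uu.
have m1 : measurable (symdiff (Q @` A i) (P @` A i)) by apply: msymdiff; exact: im_meas.
have m2 : measurable (symdiff (Q @^-1` A i) (P @^-1` A i)) by apply: msymdiff; exact: pre_meas.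
have := p_le1 m1; have := p_le1 m2; lra.
Qed.


Lemma two_ge0 i : 0 <= ((2 : R) ^- i)%:E.
Proof. by rewrite lee_fin ltW// two_pos_inv. Qed.

Lemma d_ge0 Q P : 0 <= dist_d mu A Q P.
Proof.
apply: nneseries_ge0 => i _ _; rewrite mule_ge0// ?two_ge0//.
by rewrite adde_ge0// measure_ge0.
Qed.

Lemma a_ge0 Q P : 0 <= dist_a mu A Q P.
Proof.
apply: nneseries_ge0 => i _ _; apply: nneseries_ge0 => j _ _.
by rewrite mule_ge0// ?two_ge0.
Qed.

Lemma d_le4 Q P : inv_mpt mu Q -> inv_mpt mu P -> dist_d mu A Q P <= 4%:E.
Proof.
move=> hQ hP; rewrite dE//.
apply: le_trans (@GL R 2 0 0 (fun i => (uu Q P i)%:E) _ _ _ _ _) _ => //.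
- by move=> i; rewrite lee_fin uu_ge0.
- by move=> i; rewrite lee_fin uu_le2.
- by rewrite lee_fin expr0 invr1; lra.
Qed.

Lemma a_le_2d Q P : inv_mpt mu Q -> inv_mpt mu P ->
  dist_a mu A Q P <= 2%:E * dist_d mu A Q P.
Proof.
move=> hQ hP; rewrite aE// dE// -nneseriesZl; last first.
  by move=> i _; rewrite mule_ge0// ?two_ge0// lee_fin uu_ge0.
apply: lee_nneseries => [i _ _|i _].
  rewrite mule_ge0 ?two_ge0//; apply: nneseries_ge0 => j _ _.
  by rewrite mule_ge0 ?two_ge0// lee_fin hh_ge0.
rewrite muleCA; apply: lee_wpmul2l; first exact: two_ge0.
apply: le_trans (@GL R (uu Q P i) 0 0 (fun j => (hh Q P i j)%:E) _ _ _ _ _) _ => //.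
- exact: uu_ge0.
- by move=> j; rewrite lee_fin hh_ge0.
- move=> j; rewrite lee_fin /hh /uu.
  apply: le_trans (p_absI _ _ _) _.
  + exact: im_meas.
  + exact: im_meas.
  + exact: hA.
  + by rewrite lerDl p_ge0.
- by rewrite -EFinM lee_fin expr0 invr1; lra.
Qed.

Lemma p_tri (E F G : set X) : measurable E -> measurable F -> measurable G ->
  (p (symdiff E F) <= p (symdiff G E) + p (symdiff G F))%R.
Proof.
move=> mE mF mG; apply: p_sub; try exact: msymdiff.
move=> x [[Ex nFx]|[Fx nEx]]; have [Gx|nGx] := pselect (G x).
- by right; left.
- by left; right.
- by left; left.
- by right; right.
Qed.

Lemma d_tri Q P Q' : inv_mpt mu Q -> inv_mpt mu P -> inv_mpt mu Q' ->
  dist_d mu A Q P <= dist_d mu A Q' Q + dist_d mu A Q' P.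
Proof.
move=> hQ hP hQ'; rewrite !dE// -nneseriesD; last 2 first.
- by move=> i _ _; rewrite mule_ge0 ?two_ge0// lee_fin uu_ge0.
- by move=> i _ _; rewrite mule_ge0 ?two_ge0// lee_fin uu_ge0.
apply: lee_nneseries => [i _ _|i _]; first by rewrite mule_ge0 ?two_ge0// lee_fin uu_ge0.
rewrite -!EFinM -EFinD lee_fin -mulrDr ler_wpM2l ?(ltW (two_pos_inv _))//.
rewrite /uu.
have h1 := @p_tri (Q @` A i) (P @` A i) (Q' @` A i) (im_meas hQ (hA i))
  (im_meas hP (hA i)) (im_meas hQ' (hA i)).
have h2 := @p_tri (Q @^-1` A i) (P @^-1` A i) (Q' @^-1` A i) (pre_meas hQ (hA i))
  (pre_meas hP (hA i)) (pre_meas hQ' (hA i)).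
lra.
Qed.

Lemma a_tri Q P Q' : inv_mpt mu Q -> inv_mpt mu P -> inv_mpt mu Q' ->
  dist_a mu A Q P <= dist_a mu A Q Q' + dist_a mu A Q' P.
Proof.
move=> hQ hP hQ'; rewrite !aE//.
have i0 : forall (S S' : X -> X) i j, 0 <= (2 ^- j)%:E * (hh S S' i j)%:E.
  by move=> *; rewrite mule_ge0 ?two_ge0// lee_fin hh_ge0.
have s0 : forall (S S' : X -> X) i, 0 <= \sum_(j <oo) ((2 ^- j)%:E * (hh S S' i j)%:E).
  by move=> *; apply: nneseries_ge0 => *; exact: i0.
rewrite -nneseriesD; last 2 first.
- by move=> i _ _; rewrite mule_ge0 ?two_ge0.
- by move=> i _ _; rewrite mule_ge0 ?two_ge0.
apply: lee_nneseries => [i _ _|i _]; first by rewrite mule_ge0 ?two_ge0.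
rewrite -ge0_muleDr//; apply: lee_wpmul2l; first exact: two_ge0.
rewrite -nneseriesD; [|by move=> *; exact: i0|by move=> *; exact: i0].
apply: lee_nneseries => [j _ _|j _]; first exact: i0.
rewrite -!EFinM -EFinD lee_fin -mulrDr ler_wpM2l ?(ltW (two_pos_inv _))//.
exact: ler_distD.
Qed.

Lemma a_term Q P i j : inv_mpt mu Q -> inv_mpt mu P ->
  ((2 ^- i * 2 ^- j * hh Q P i j)%:E <= dist_a mu A Q P).
Proof.
move=> hQ hP; rewrite aE//.
have i0 : forall i j, 0 <= (2 ^- j)%:E * (hh Q P i j)%:E.
  by move=> *; rewrite mule_ge0 ?two_ge0// lee_fin hh_ge0.
apply: le_trans (term_le i _); last first.
  by move=> k; rewrite mule_ge0 ?two_ge0//; apply: nneseries_ge0 => *; exact: i0.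
rewrite -mulrA EFinM; apply: lee_wpmul2l; first exact: two_ge0.
by rewrite EFinM; apply: (term_le j); exact: i0.
Qed.


Hypothesis hD : forall B, measurable B -> forall eps : R, (0 < eps)%R ->
  exists i, (mu (symdiff (A i) B) < eps%:E)%E.

Lemma dens (B : set X) eps : measurable B -> (0 < eps)%R ->
  exists j, (p (symdiff (A j) B) <= eps)%R.
Proof.
move=> mB e0; have [j hj] := hD mB e0; exists j.
by rewrite -lee_fin -muE ?ltW//; apply: msymdiff.
Qed.

Lemma AL Q eta : inv_mpt mu Q -> (0 < eta)%R ->
  exists2 dl : R, (0 < dl)%R & forall P, inv_mpt mu P ->
    dist_a mu A Q P < dl%:E -> dist_d mu A Q P < eta%:E.
Proof.
move=> hQ eta0; pose eps := (eta / 48)%R.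
have e0 : (0 < eps)%R by rewrite /eps divr_gt0.
have [N hN] := @pow_small R (eta / 16) ltac:(by rewrite divr_gt0).
have /choice [jf hj] : forall i, exists j, (p (symdiff (A j) (Q @` A i)) <= eps)%R.
  by move=> i; apply: dens => //; apply: im_meas.
have /choice [kf hk] : forall i, exists k, (p (symdiff (A k) (Q @^-1` A i)) <= eps)%R.
  by move=> i; apply: dens => //; apply: pre_meas.
have [dl dl0 hdl] := @fin_min R N
  (fun i => Num.min (2 ^- i * 2 ^- (jf i) * eps) (2 ^- (kf i) * 2 ^- i * eps))%R
  ltac:(by move=> i; rewrite lt_min !mulr_gt0 ?two_pos_inv).
exists dl => // P hP ha.
have hhb : forall a b, (dl <= 2 ^- a * 2 ^- b * eps)%R -> (hh Q P a b <= eps)%R.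
  move=> a b hab; have h := le_lt_trans (a_term a b hQ hP) ha.
  rewrite lte_fin in h; have h' := lt_le_trans h hab.
  rewrite ltr_pM2l ?mulr_gt0 ?two_pos_inv// in h'.
  exact: ltW.
rewrite dE//.
apply: le_lt_trans (@GL R 2 (12 * eps) N (fun i => (uu Q P i)%:E) _ _ _ _ _) _.
- by [].
- by rewrite mulr_ge0// ltW.
- by move=> i; rewrite lee_fin uu_ge0.
- by move=> i; rewrite lee_fin uu_le2.
- move=> i iN; rewrite lee_fin; have := hdl i iN; rewrite le_min => /andP[h1 h2].
  have mAi := hA i.
  have u1 : (p (symdiff (Q @` A i) (P @` A i)) <= 6 * eps)%R.
    apply: (p_chain (C := A (jf i))); [exact: im_meas|exact: im_meas|exact: hA| | exact: hj|].
      by rewrite !p_im.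
    have := hhb _ _ h1; rewrite /hh => /ler_normlP[_]; lra.
  have u2 : (p (symdiff (Q @^-1` A i) (P @^-1` A i)) <= 6 * eps)%R.
    have mQ := pre_meas hQ mAi; have mP := pre_meas hP mAi; have mk := hA (kf i).
    apply: (p_chain (C := A (kf i))) => //; first by rewrite !p_pre.
    have mQk : measurable (Q @^-1` A i `&` A (kf i)) by exact: measurableI.
    have mPk : measurable (P @^-1` A i `&` A (kf i)) by exact: measurableI.
    rewrite -(p_im hQ mQk) -(p_im hP mPk) !im_preI// [A i `&` _]setIC [A i `&` (P @` _)]setIC.
    have := hhb _ _ h2; rewrite /hh => /ler_normlP[_]; lra.
  by rewrite /uu; lra.
- rewrite lte_fin /eps; lra.
Qed.


Section Act.
Variables (G : topologicalType) (T : G -> X -> X).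
Hypothesis hT : forall g, inv_mpt mu (T g).
Hypothesis hTc : forall B C, measurable B -> measurable C ->
  continuous (fun g => fine (mu (T g @` B `&` C))).

Lemma CONT g0 dl : (0 < dl)%R -> \forall g \near g0, dist_a mu A (T g0) (T g) < dl%:E.
Proof.
move=> dl0.
suff: \forall g \near g0, dist_a mu A (T g0) (T g) < (Num.min dl 1%R)%:E.
  by apply: filterS => g h; apply: lt_le_trans h _; rewrite lee_fin ge_min lexx.
have dl1 : (Num.min dl 1%R <= 1)%R by rewrite ge_min lexx orbT.
have dl0' : (0 < Num.min dl 1%R)%R by rewrite lt_min dl0 ltr01.
move: (Num.min dl 1%R) dl0' dl1 => {dl0}dl dl0 dl1.
pose eps := (dl / 8)%R.
have e0 : (0 < eps)%R by rewrite divr_gt0.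
have [N hN] := @pow_small R (dl / 32) ltac:(by rewrite divr_gt0).
have hn : \forall g \near g0, forall i, (i < N)%N -> forall j, (j < N)%N ->
    (hh (T g0) (T g) i j <= eps)%R.
  apply: near_fin => i _; apply: near_fin => j _.
  have := @hTc _ _ (hA i) (hA j) g0 => /cvgr_dist_lt /(_ _ e0).
  by apply: filterS => g /ltW.
apply: filterS hn => g hg; rewrite aE//.
have hin : forall i, \sum_(j <oo) ((2 ^- j)%:E * (hh (T g0) (T g) i j)%:E) <=
    (2 * (if (i < N)%N then eps else 0) + 2 * 1 * 2 ^- (if (i < N)%N then N else 0))%:E.
  move=> i; apply: GL => //.
  - by case: ifP => _; [exact: ltW|].
  - by move=> j; rewrite lee_fin hh_ge0.
  - by move=> j; rewrite lee_fin hh_le1.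
  - move=> j; case: ifP => iN; last by rewrite ltn0.
    by move=> jN; rewrite lee_fin hg.
apply: le_lt_trans (@GL R 2 (2 * eps + 2 * 1 * 2 ^- N) N _ _ _ _ _ _) _.
- by [].
- by rewrite addr_ge0// ?mulr_ge0// ?ltW// two_pos_inv.
- by move=> i; apply: nneseries_ge0 => j _ _; rewrite mule_ge0 ?two_ge0// lee_fin hh_ge0.
- move=> i; apply: le_trans (hin i) _; rewrite lee_fin.
  case: ifP => _; last by rewrite expr0 invr1; lra.
  have := @pow_anti R 0 N (leq0n N); rewrite expr0 invr1 => h.
  rewrite /eps; have := hN; have := dl1; have := dl0; lra.
- by move=> i iN; apply: le_trans (hin i) _; rewrite iN.
- rewrite lte_fin /eps; have := two_pos_inv R N; lra.
Qed.

Lemma CL (K : set G) eta : compact K -> (0 < eta)%R ->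
  exists2 dl : R, (0 < dl)%R & forall S : G -> X -> X, (forall g, inv_mpt mu (S g)) ->
    forall g, K g -> dist_a mu A (T g) (S g) < dl%:E -> dist_d mu A (T g) (S g) < eta%:E.
Proof.
move=> cK eta0; move/compact_near_coveringP: cK => cK.
have e2 : (0 < eta / 2)%R by rewrite divr_gt0.
have := cK nat \oo (fun n g => forall S : G -> X -> X, (forall g, inv_mpt mu (S g)) ->
    dist_a mu A (T g) (S g) < (2 ^- n)%:E -> dist_d mu A (T g) (S g) < eta%:E) _.
case.
- move=> g0 Kg0.
  have [d0 d00 hd0] := AL (hT g0) e2.
  have [d1 d10 hd1] := AL (hT g0) e2.
  have d02 : (0 < d0 / 2)%R by rewrite divr_gt0.
  have [n0 hn0] := pow_small d02.
  have U1 := CONT g0 d02.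
  have U2 := CONT g0 d10.
  exists ([set g | dist_a mu A (T g0) (T g) < (d0 / 2)%:E /\
                   dist_d mu A (T g0) (T g) < (eta / 2)%:E], [set n | (n0 <= n)%N]).
    split => /=; last by exists n0.
    apply: filterS (filterI U1 U2) => g [h1 h2]; split => //.
    exact: hd1.
  move=> [g n] /= [[h1 h2] nn0] S hS ha.
  have ha' : dist_a mu A (T g0) (S g) < d0%:E.
    apply: le_lt_trans (a_tri (hT g0) (hS g) (hT g)) _.
    rewrite (splitr d0) EFinD; apply: lteD => //.
    apply: lt_le_trans ha _; rewrite lee_fin.
    exact: le_trans (pow_anti _ nn0) hn0.
  have hdd := hd0 _ (hS g) ha'.
  apply: le_lt_trans (d_tri (hT g) (hS g) (hT g0)) _.
  by rewrite (splitr eta) EFinD; apply: lteD.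
- move=> n _ Hn; exists (2 ^- n)%R; first exact: two_pos_inv.
  by move=> S hS g Kg; apply: (Hn n (leqnn n)).
Qed.


Lemma sup_ge0 (K : set G) (F : G -> \bar R) : (exists g, K g) -> (forall g, 0 <= F g) ->
  0 <= ereal_sup [set F g | g in K].
Proof.
move=> [g Kg] F0; apply: le_trans (F0 g) _; apply: ereal_sup_ubound; by exists g.
Qed.

Lemma KEY (I : set nat) (Kf : nat -> set G) eta :
  (forall i, I i -> compact (Kf i) /\ (Kf i !=set0)) -> (0 < eta)%R ->
  exists2 dl : R, (0 < dl)%R & forall S : G -> X -> X, (forall g, inv_mpt mu (S g)) ->
    dist_aG mu A I Kf T S < dl%:E -> dist_dG mu A I Kf T S <= eta%:E.
Proof.
move=> hK eta0; pose eps := (eta / 4)%R.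
have e0 : (0 < eps)%R by rewrite divr_gt0.
have [N hN] := @pow_small R (eta / 16) ltac:(by rewrite divr_gt0).
have /choice [df hdf] : forall i, exists dl : R, (0 < dl)%R /\ (I i ->
    forall S : G -> X -> X, (forall g, inv_mpt mu (S g)) ->
    forall g, Kf i g -> dist_a mu A (T g) (S g) < dl%:E -> dist_d mu A (T g) (S g) < eps%:E).
  move=> i; have [Ii|nIi] := pselect (I i).
    have [cK _] := hK i Ii; have [dl dl0 hdl] := CL cK e0.
    by exists dl; split.
  by exists 1%R; split => //; rewrite ltr01.
have [dl dl0 hdl] := @fin_min R N (fun i => 2 ^- N * df i)%R
  ltac:(by move=> i; rewrite mulr_gt0 ?two_pos_inv//; case: (hdf i)).
exists dl => // S hS haG.

rewrite /dist_dG eseries_mkcond.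
rewrite /dist_aG eseries_mkcond in haG.
set supd := fun i => ereal_sup [set dist_d mu A (T g) (S g) | g in Kf i].
set supa := fun i => ereal_sup [set dist_a mu A (T g) (S g) | g in Kf i].
have supd0 : forall i, I i -> 0 <= supd i.
  move=> i Ii; apply: sup_ge0; last by move=> g; exact: d_ge0.
  by case: (hK i Ii) => _ [g Kg]; exists g.
have supa0 : forall i, I i -> 0 <= supa i.
  move=> i Ii; apply: sup_ge0; last by move=> g; exact: a_ge0.
  by case: (hK i Ii) => _ [g Kg]; exists g.
have -> : \sum_(0 <= i <oo) (if i \in I then (2 ^- i)%:E * supd i else 0) =
    \sum_(i <oo) ((2 ^- i)%:E * (if i \in I then supd i else 0)).
  by apply: eq_eseriesr => i _; case: ifP => _; rewrite ?mule0.
apply: le_trans (@GL R 4 eps N _ _ _ _ _ _) _.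
- by [].
- exact: ltW.
- by move=> i; case: ifPn => // /set_mem Ii; exact: supd0.
- move=> i; case: ifPn => // _; apply: ge_ereal_sup => y [g Kg <-].
  exact: d_le4.
- move=> i iN; case: ifPn => [/set_mem Ii|_]; last exact: ltW.
  have ht : (2 ^- i)%:E * supa i < ((2 ^- i) * df i)%:E.
    have hterm := @term_le (fun k => if k \in I then (2 ^- k)%:E * supa k else 0) i.
    rewrite /= (mem_set Ii) in hterm.
    have h0 : forall k, 0 <= (if k \in I then (2 ^- k)%:E * supa k else 0).
      move=> k; case: ifPn => // /set_mem Ik.
      by rewrite mule_ge0 ?two_ge0// supa0.
    have {}hterm := hterm h0.
    have hdi : (dl <= 2 ^- i * df i)%R.
      apply: le_trans (hdl i iN) _.
      have hdf0 : (0 <= df i)%R by case: (hdf i) => /ltW.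
      have hp : ((2:R) ^- N <= 2 ^- i)%R by apply: pow_anti; exact: ltnW.
      by rewrite ler_wpM2r.
    have hs : \sum_(0 <= k <oo) (if k \in I then (2 ^- k)%:E * supa k else 0) < dl%:E.
      exact: haG.
    apply: le_lt_trans hterm _; apply: lt_le_trans hs _.
    by rewrite lee_fin.
  rewrite EFinM lte_pmul2l ?lte_fin ?two_pos_inv// in ht.
  apply: ge_ereal_sup => y [g Kg <-]; apply: ltW.
  case: (hdf i) => _ /(_ Ii S hS g Kg); apply.
  apply: le_lt_trans ht; apply: ereal_sup_ubound; by exists g.
- rewrite lee_fin /eps; lra.
Qed.

End Act.

Section GLevel.
Variables (G : topologicalType) (I : set nat) (Kf : nat -> set G).
Hypothesis hKn : forall i, I i -> exists g, Kf i g.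

Lemma sup_ge0' (K : set G) (F : G -> \bar R) : (exists g, K g) -> (forall g, 0 <= F g) ->
  0 <= ereal_sup [set F g | g in K].
Proof.
move=> [g Kg] F0; apply: le_trans (F0 g) _; apply: ereal_sup_ubound; by exists g.
Qed.

Lemma dG_ge0 (T S : G -> X -> X) : 0 <= dist_dG mu A I Kf T S.
Proof.
apply: nneseries_ge0 => i _ /set_mem Ii; rewrite mule_ge0 ?two_ge0//.
by apply: sup_ge0' => [|g]; [exact: hKn|exact: d_ge0].
Qed.

Lemma aG_ge0 (T S : G -> X -> X) : 0 <= dist_aG mu A I Kf T S.
Proof.
apply: nneseries_ge0 => i _ /set_mem Ii; rewrite mule_ge0 ?two_ge0//.
by apply: sup_ge0' => [|g]; [exact: hKn|exact: a_ge0].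
Qed.

Lemma aG_le (T S : G -> X -> X) : (forall g, inv_mpt mu (T g)) ->
  (forall g, inv_mpt mu (S g)) ->
  dist_aG mu A I Kf T S <= 2%:E * dist_dG mu A I Kf T S.
Proof.
move=> hT hS; rewrite /dist_aG /dist_dG -nneseriesZl; last first.
  move=> i /set_mem Ii; rewrite mule_ge0 ?two_ge0//.
  by apply: sup_ge0' => [|g]; [exact: hKn|exact: d_ge0].
apply: lee_nneseries => [i _ /set_mem Ii|i _].
  rewrite mule_ge0 ?two_ge0//.
  by apply: sup_ge0' => [|g]; [exact: hKn|exact: a_ge0].
rewrite muleCA; apply: lee_wpmul2l; first exact: two_ge0.
apply: ge_ereal_sup => y [g Kg <-].
apply: le_trans (a_le_2d (hT g) (hS g)) _.
apply: lee_wpmul2l => //; apply: ereal_sup_ubound; by exists g.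
Qed.

End GLevel.

End Dist.
End MP.

Unset Implicit Arguments.
Unset Strict Implicit.

Theorem mainTheorem9
  (d : measure_display) (X : measurableType d) (R : realType)
  (mu : probability X R)
  (A : nat -> set X)
  (G : topologicalType) (mul : G -> G -> G) (inv : G -> G) (one : G)
  (I : set nat) (K : nat -> set G) (Gam : set G) :
  nonatomic_lebesgue_space mu ->
  nonatomic mu ->
  (forall i, measurable (A i)) ->
  <<s range A>> = @measurable d X ->
  (forall B, measurable B -> forall eps : R, 0 < eps ->
     exists i, (mu (symdiff (A i) B) < eps%:E)%E) ->
  lc_group mul inv one ->
  (forall i, I i -> compact (K i) /\ (interior (K i) !=set0)) ->
  (exists S0, S0 `<=` \bigcup_(i in I) K i /\ generates mul inv one S0) ->
  unbounded Gam ->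
  forall U : set (G -> X -> X),
    metric_open (mixing_actions mu mul Gam) (metric_w mu A I K Gam) U <->
    metric_open (mixing_actions mu mul Gam) (leash_m mu A I K Gam) U.
Proof.
move=> _ _ hA _ hD _ hK _ hGam U.
have hKn : forall i, I i -> exists g, K i g.
  by move=> i /hK [_ [g /interior_subset Kg]]; exists g.
have hK' : forall i, I i -> compact (K i) /\ (K i !=set0).
  by move=> i Ii; split; [case: (hK i Ii)|exact: hKn].
have [g0 Gg0] : exists g, Gam g.
  apply: contrapT => nG; apply: hGam; exists set0; split; first exact: compact0.
  by move=> g Gg; apply: nG; exists g.
have s0 : forall T S : G -> X -> X, (0 <= sup_a_Gam mu A Gam T S)%E.
  move=> T S; apply: le_trans (a_ge0 mu A (T g0) (S g0)) _.
  by apply: ereal_sup_ubound; exists g0.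
split.
- case=> UM hU; split => // T UT.
  have [e [e0 he]] := hU T UT.
  exists (e / 2); split; first by rewrite divr_gt0.
  move=> S MS hm; apply: he => //.
  have [[hT _ _] _] := UM T UT.
  have [[hS _ _] _] := MS.
  have h1 := aG_le hA hKn hT hS.
  have hdG := dG_ge0 mu A hKn T S.
  have hs := s0 T S.
  apply: (@le_lt_trans _ _ (2%:E * leash_m mu A I K Gam T S)%E).
    rewrite /metric_w /leash_m ge0_muleDr //; apply: leeD => //.
    by rewrite -[X in (X <= _)%E]mul1e; apply: lee_wpmul2r => //; rewrite lee_fin ler1n.
  apply: (@lt_le_trans _ _ ((2 * (e / 2))%:E)).
    by rewrite EFinM lte_pmul2l.
  by rewrite lee_fin; lra.
- case=> UM hU; split => // T UT.
  have [e [e0 he]] := hU T UT.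
  have [[hT _ hTc] _] := UM T UT.
  have e4 : 0 < e / 4 by rewrite divr_gt0.
  have [dl dl0 hdl] := KEY hA hD hT hTc hK' e4.
  exists (Num.min dl (e / 2)); split; first by rewrite lt_min dl0 divr_gt0.
  move=> S MS hw; apply: he => //.
  have [[hS _ _] _] := MS.
  rewrite /metric_w in hw.
  have ha0 := aG_ge0 mu A hKn T S.
  have hs := s0 T S.
  have haG : (dist_aG mu A I K T S < dl%:E)%E.
    apply: le_lt_trans (_ : _ <= dist_aG mu A I K T S + sup_a_Gam mu A Gam T S)%E _.
      by rewrite leeDl.
    by apply: lt_le_trans hw _; rewrite lee_fin ge_min lexx.
  have hsG : (sup_a_Gam mu A Gam T S < (e / 2)%:E)%E.
    apply: le_lt_trans (_ : _ <= dist_aG mu A I K T S + sup_a_Gam mu A Gam T S)%E _.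
      by rewrite leeDr.
    by apply: lt_le_trans hw _; rewrite lee_fin ge_min lexx orbT.
  have hdG := hdl S hS haG.
  rewrite /leash_m; apply: le_lt_trans (leeD hdG (lexx _)) _.
  apply: (@lt_le_trans _ _ ((e / 4)%:E + (e / 2)%:E)%E).
    by apply: lee_ltD.
  by rewrite -EFinD lee_fin; lra.
Qed.
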